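(* Let $w$ be a metric on a set $V$ of $n$ points taking positive integer values such that the graph $G_1$ (pairs at distance $1$) is connected, and let $\ell$ be an integer with $0<\ell<n/2$. Then $$\mathsf{TSP}(w)\ \ge\ n+\frac17\sum_{v\in L_\ell}\mathsf{rc}(S_v).$$
   Context: $G_1$ is the graph on $V$ whose edges are the pairs $(u,v)$ with $w(u,v)=1$. $\mathsf{TSP}(w)$ is the minimum weight of a Hamiltonian cycle on $V$ under $w$. A vertex $v$ is $\ell$-light iff there is an edge $e$ of $G_1$ incident to $v$ that is a bridge of $G_1$ and such that the connected component of $G_1\setminus e$ containing $v$ has at most $\ell$ vertices; since $\ell<n/2$ such an edge (the witness $e_v$) is unique, and $S_v$ denotes the connected component of $G_1\setminus e_v$ containing $v$. A vertex $v$ is maximal $\ell$-light iff it is $\ell$-light and there is no other $\ell$-light vertex $u$ with $v\in V(S_u)$; $L_\ell$ is the set of maximal $\ell$-light vertices. For $v\in L_\ell$ and $u\in V(S_v)$, the out-reach distance is $\mathsf{ord}(u)=\min\{w(u,u'):u'\notin V(S_v)\}$. A reconfiguration of $S_v$ is a multiset $R$ of unordered pairs of vertices of $V(S_v)$ whose induced multigraph on $V(S_v)$ is connected; $V_1(R)$ is the set of vertices of odd degree in this multigraph. Its cost is $\mathsf{cost}(R)=\sum_{(u,u')\in R}w(u,u')+\frac12\sum_{u\in V_1(R)}\mathsf{ord}(u)-(|V(S_v)|-1)$, and $\mathsf{rc}(S_v)$ is the minimum cost of a reconfiguration of $S_v$. *)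

(* Defs.v *)
(* rationals for the half-integer costs. *)
From HB Require Import structures.
From mathcomp Require Import all_boot all_order all_algebra.
From Stdlib Require Import ClassicalEpsilon.
Set Implicit Arguments. Unset Strict Implicit. Unset Printing Implicit Defensive.
Import Order.TTheory GRing.Theory Num.Theory.

Section TSPDefs.
Variables (V : finType) (w : V -> V -> nat) (l : nat).

Definition is_int_metric : Prop :=
  [/\ forall u v, w u v = 0 <-> u = v,
      forall u v, w u v = w v u &
      forall u v x, w u x <= w u v + w v x].

Definition G1 : rel V := fun u v => w u v == 1.

Definition G1_connected : Prop := forall u v, connect G1 u v.

Definition G1_minus (a b : V) : rel V :=
  fun x y => G1 x y && ~~ (((x == a) && (y == b)) || ((x == b) && (y == a))).

Definition is_bridge (a b : V) : bool := G1 a b && ~~ connect (G1_minus a b) a b.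

Definition comp_minus (a b x : V) : {set V} := [set y | connect (G1_minus a b) x y].

Definition light_witness (v u : V) : bool :=
  is_bridge v u && (#|comp_minus v u v| <= l).

Definition light (v : V) : bool := [exists u, light_witness v u].

(* S_v (the witness edge is unique when l < n/2; we pick it) *)
Definition S (v : V) : {set V} :=
  if [pick u | light_witness v u] is Some u then comp_minus v u v else set0.

Definition max_light (v : V) : bool :=
  light v && [forall u, ~~ [&& u != v, light u & v \in S u]].

Definition L : {set V} := [set v | max_light v].

(* out-reach distance of u w.r.t. S_v : min over u' outside S_v of w u u'
   (the default value is an upper bound on all weights, so it is the true
   minimum as soon as V(S_v) <> V) *)
Definition wmax : nat := \max_(p : V * V) w p.1 p.2.
Definition ord (v u : V) : nat :=
  \big[minn/wmax]_(u' | u' \notin S v) w u u'.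

(* reconfigurations of S_v : a multiset (list) of unordered pairs of
   (distinct) vertices of V(S_v) whose induced multigraph on V(S_v) is connected *)
Definition mg_rel (R : seq (V * V)) : rel V :=
  fun x y => ((x, y) \in R) || ((y, x) \in R).

Definition is_reconf (v : V) (R : seq (V * V)) : Prop :=
  (forall p, p \in R -> [/\ p.1 \in S v, p.2 \in S v & p.1 != p.2]) /\
  (forall x y, x \in S v -> y \in S v -> connect (mg_rel R) x y).

Definition deg (R : seq (V * V)) (x : V) : nat :=
  count (fun p => p.1 == x) R + count (fun p => p.2 == x) R.

Definition V1 (v : V) (R : seq (V * V)) : {set V} :=
  [set x in S v | odd (deg R x)].

Definition cost (v : V) (R : seq (V * V)) : rat :=
  ((\sum_(p <- R) w p.1 p.2)%N%:R
  + (1 / 2%:R) * (\sum_(x in V1 v R) (ord v x)%:R)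
  - ((#|S v|)%:R - 1))%R.

Definition is_min_cost (v : V) (c : rat) : Prop :=
  (exists R, is_reconf v R /\ cost v R = c) /\
  (forall R, is_reconf v R -> (c <= cost v R)%R).

(* rc(S_v) : the minimum cost of a reconfiguration (0 if no minimum exists,
   which never happens) *)
Definition rc (v : V) : rat :=
  match excluded_middle_informative (exists c, is_min_cost v c) with
  | left H => proj1_sig (constructive_indefinite_description _ H)
  | right _ => 0
  end.

(* weight of the Hamiltonian cycle visiting the list s (a permutation of V)
   in order and returning to the start *)
Definition cycle_weight (s : seq V) : nat :=
  if s is x :: s' then \sum_(p <- zip s (rcons s' x)) w p.1 p.2 else 0.

Definition TSP : nat :=
  \big[minn/cycle_weight (enum V)]_(s <- permutations (enum V)) cycle_weight s.

End TSPDefs.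

(* Main.v *)
Require Import Defs.
From HB Require Import structures.
From mathcomp Require Import all_boot all_order all_algebra.
From Stdlib Require Import ClassicalEpsilon.
From mathcomp Require Import ring lra zify.
Import Order.TTheory GRing.Theory Num.Theory.
Set Implicit Arguments. Unset Strict Implicit. Unset Printing Implicit Defensive.

Lemma cross (T : finType) (e : rel T) (P : pred T) x y :
  connect e x y -> P x -> ~~ P y ->
  exists a b, [/\ e a b, P a, ~~ P b &
     connect (fun s t => [&& e s t, P s & P t]) x a].
Proof.
move/connectP=> [p]; elim: p x => [|z p IH] x /=.
  by move=> _ -> ->.
case/andP=> exz pz lst Px nPy.
case Pz: (P z).
  have [a [b [eab Pa nPb c]]] := IH z pz lst Pz nPy.
  exists a, b; split => //.
  by apply: connect_trans c; apply: connect1; rewrite exz Px Pz.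
by exists x, z; rewrite exz Px Pz; split.
Qed.

Lemma connect_restr (T : finType) (e : rel T) v x : connect e v x ->
  connect (fun a b => [&& e a b, connect e v a & connect e v b]) v x.
Proof.
set R := fun a b => _.
suff H : forall p z, connect e v z -> path e z p -> connect R z (last z p).
  by move/connectP=> [p pth ->]; apply: H.
elim=> [|y p IH] z /= Hvz; first by move=> _.
case/andP=> ezy pth.
have Hvy : connect e v y by apply: connect_trans Hvz (connect1 ezy).
apply: (connect_trans _ (IH y Hvy pth)).
by apply: connect1; rewrite /R ezy Hvz Hvy.
Qed.

Lemma mg_rel_sym (T : finType) (R : seq (T * T)) : symmetric (mg_rel R).
Proof. by move=> x y; rewrite /mg_rel orbC. Qed.

Lemma mg_rel_sub (T : finType) (R R' : seq (T * T)) : {subset R <= R'} ->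
  forall x y, connect (mg_rel R) x y -> connect (mg_rel R') x y.
Proof.
move=> sub; apply: connect_sub => x y /orP[] h; apply: connect1;
by rewrite /mg_rel (sub _ h) ?orbT.
Qed.

Lemma aug (T : finType) (H : rel T) (A : {set T}) :
  (forall x y, x \in A -> y \in A ->
     connect (fun a b => [&& H a b, a \in A & b \in A]) x y) ->
  forall n (Q : {set T}) (R : seq (T * T)) q0, q0 \in Q -> #|Q| <= n ->
  Q \subset A ->
  (forall x, x \in A -> exists2 q, q \in Q & connect (mg_rel R) x q) ->
  exists F : seq (T * T),
    [/\ size F < #|Q|,
        (forall p, p \in F -> [&& H p.1 p.2, p.1 \in A & p.2 \in A]) &
        forall x y, x \in A -> y \in A -> connect (mg_rel (F ++ R)) x y].
Proof.
move=> HA; elim=> [|n IH] Q R q0 q0Q.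
  by rewrite leqn0 cards_eq0 => /eqP QE; rewrite QE inE in q0Q.
move=> cQ sQA cov.
have q0A : q0 \in A := subsetP sQA _ q0Q.
have csym := sym_connect_sym (@mg_rel_sym _ R).
have [all|] := boolP [forall y in A, connect (mg_rel R) q0 y].
  exists [::]; split => //; first by apply/card_gt0P; exists q0.
  move=> x y xA yA /=; have /forall_inP h := all.
  by apply: connect_trans (h y yA); rewrite csym; apply: h.
move/forall_inPn => [y0 y0A ny0].
have [a [b [Hab Pa nPb _]]] :=
  cross (P := connect (mg_rel R) q0) (HA q0 y0 q0A y0A) (connect0 _ q0) ny0.
case/and3P: Hab => Hab aA bA.
have [q1 q1Q bq1] := cov b bA.
have nq1 : ~~ connect (mg_rel R) q0 q1.
  by apply: contra nPb => h; apply: connect_trans h _; rewrite csym.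
have q10 : q1 != q0 by apply: contraNneq nq1 => ->; apply: connect0.
set R' := (a, b) :: R.
have subR : {subset R <= R'} by move=> p pR; rewrite inE pR orbT.
have [||||F' [sF eF cF]] := IH (Q :\ q1) R' q0.
- by rewrite in_setD1 eq_sym q10.
- by move: cQ; rewrite (cardsD1 q1 Q) q1Q.
- by apply: subset_trans (subsetDl _ _) sQA.
- move=> x xA; have [q qQ xq] := cov x xA.
  have [eq1|nq] := eqVneq q q1.
    exists q0; first by rewrite in_setD1 eq_sym q10.
    apply: connect_trans (mg_rel_sub subR xq) _; rewrite eq1.
    apply: connect_trans (mg_rel_sub subR _) _; first by rewrite csym; exact: bq1.
    apply: connect_trans (connect1 (_ : mg_rel R' b a)) _.
      by rewrite /mg_rel !inE eqxx orbT.
    by apply: (mg_rel_sub subR); rewrite csym.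
  exists q; first by rewrite !inE nq qQ.
  exact: (mg_rel_sub subR).
exists (rcons F' (a, b)); split.
- by move: sF; rewrite size_rcons (cardsD1 q1 Q) q1Q.
- by move=> p; rewrite mem_rcons inE => /orP[/eqP ->|]; [rewrite /= Hab aA bA|apply: eF].
- by move=> x y xA yA; rewrite cat_rcons; apply: cF.
Qed.

Lemma cycle_weight_next (V : finType) (w : V -> V -> nat) (s : seq V) :
  uniq s -> cycle_weight w s = \sum_(y <- s) w y (next s y).
Proof.
case: s => [|x s'] U; first by rewrite /cycle_weight big_nil.
rewrite /cycle_weight.
have -> : zip (x :: s') (rcons s' x) = [seq (y, next (x :: s') y) | y <- x :: s'].
  apply: (@eq_from_nth _ (x, x)).
    by rewrite size_zip size_map size_rcons /= minnn.
  move=> i; rewrite size_zip size_rcons [size (_ :: _)]/= minnn => lti.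
  rewrite nth_zip ?size_rcons // (nth_map x) // nth_rcons_default.
  congr pair; rewrite next_nth mem_nth // index_uniq //.
by rewrite big_map.
Qed.

Lemma ctrans (T : finType) (e : rel T) x y z :
  connect e x y -> connect e y z -> connect e x z.
Proof. exact: connect_trans. Qed.

Section Graph.
Variables (V : finType) (w : V -> V -> nat) (l : nat).
Hypothesis Hmet : is_int_metric w.

Lemma w0 x y : (w x y == 0) = (x == y).
Proof. by case: Hmet => h _ _; apply/eqP/eqP => /h. Qed.

Lemma wsym x y : w x y = w y x.
Proof. by case: Hmet. Qed.

Lemma G1sym : symmetric (G1 w).
Proof. by move=> x y; rewrite /G1 wsym. Qed.

Lemma G1neq x y : G1 w x y -> x != y.
Proof. by rewrite /G1 -w0 => /eqP ->. Qed.

Lemma exit_lem v u x y : is_bridge w v u -> x \in comp_minus w v u v ->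
  y \notin comp_minus w v u v -> G1 w x y -> x = v /\ y = u.
Proof.
case/andP=> _ nb; rewrite !inE => vx nvy gxy.
have [gm|] := boolP (G1_minus w v u x y).
  by have := ctrans vx (connect1 gm); rewrite (negbTE nvy).
rewrite /G1_minus gxy /= negbK => /orP[/andP[/eqP -> /eqP ->] //|].
by case/andP=> /eqP xu _; move: vx; rewrite xu (negbTE nb).
Qed.

Lemma S_spec v : light w l v ->
  exists u, light_witness w l v u /\ S w l v = comp_minus w v u v.
Proof.
rewrite /light /S => /existsP[u0 h0].
by case: pickP => [u hu | /(_ u0)]; [exists u | rewrite h0].
Qed.

Lemma in_S v : light w l v -> v \in S w l v.
Proof. by case/S_spec=> u [_ ->]; rewrite inE connect0. Qed.

Lemma card_S v : light w l v -> #|S w l v| <= l.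
Proof. by case/S_spec=> u [/andP[_ h] ->]. Qed.

Lemma exit_S v x y : light w l v -> x \in S w l v -> y \notin S w l v ->
  G1 w x y -> x = v.
Proof.
case/S_spec=> u [/andP[hb _] ->] xA yA g.
by have [] := exit_lem hb xA yA g.
Qed.

Lemma exit_S2 v x y : light w l v -> x \in S w l v -> y \notin S w l v ->
  G1 w x y -> exists u, [/\ x = v, y = u & S w l v = comp_minus w v u v /\ is_bridge w v u].
Proof.
case/S_spec=> u [/andP[hb _] ->] xA yA g.
by have [-> ->] := exit_lem hb xA yA g; exists u.
Qed.

Lemma S_conn v : light w l v -> forall x y, x \in S w l v -> y \in S w l v ->
  connect (fun a b => [&& G1 w a b, a \in S w l v & b \in S w l v]) x y.
Proof.
case/S_spec=> u [_ ->].
set A := comp_minus w v u v.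
set HA := fun a b => _.
have HAsym : symmetric HA.
  by move=> a b; rewrite /HA G1sym; case: (a \in A); case: (b \in A); rewrite ?andbF ?andbT.
have vx z : z \in A -> connect HA v z.
  rewrite inE => /connect_restr; apply: connect_sub => a b /and3P[g va vb].
  apply: connect1; rewrite /HA /A !inE va vb !andbT; by case/andP: g.
move=> x y xA yA; apply: connect_trans (vx _ yA).
by rewrite sym_connect_sym //; apply: vx.
Qed.

Lemma S_disj v1 v2 y : v1 \in L w l -> v2 \in L w l ->
  y \in S w l v1 -> y \in S w l v2 -> v1 = v2.
Proof.
rewrite !inE => /andP[l1 m1] /andP[l2 m2] y1 y2.
apply/eqP; apply: contraT => ne.
have n12 : v1 \notin S w l v2.
  by move/forallP: m1 => /(_ v2); rewrite eq_sym ne l2.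
have n21 : v2 \notin S w l v1.
  by move/forallP: m2 => /(_ v1); rewrite ne l1.
have [u1 [_ E1]] := S_spec l1.
move: y1 n21; rewrite E1 inE => y1 n21.
have y2' : ~~ (y \notin S w l v2) by rewrite negbK.
have [a [b [gab na nb c]]] := cross (P := fun z => z \notin S w l v2) y1 n12 y2'.
rewrite negbK in nb.
have va : connect (G1_minus w v1 u1) v1 a.
  by apply: connect_sub c => s t /andP[h _]; apply: connect1.
have vb := ctrans va (connect1 gab).
have g : G1 w b a by rewrite G1sym; case/andP: gab.
have := exit_S l2 nb na g => eb.
by rewrite inE -eb vb in n21.
Qed.

End Graph.


Lemma costE (V : finType) (w : V -> V -> nat) l v R :
  cost w l v R = ((2 * (\sum_(p <- R) w p.1 p.2) + \sum_(x in V1 w l v R) ord w l v x)%N%:R / 2%:R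
                  - ((#|S w l v|)%:R - 1))%R.
Proof.
rewrite /cost natrD natrM !natr_sum.
lra.
Qed.

Lemma rc_le (V : finType) (w : V -> V -> nat) l v R :
  is_reconf w l v R -> (rc w l v <= cost w l v R)%R.
Proof.
move=> hR.
pose N R' := (2 * (\sum_(p <- R') w p.1 p.2) + \sum_(x in V1 w l v R') ord w l v x)%N.
pose P m := exists R', is_reconf w l v R' /\ N R' = m.
pose Pb m := if excluded_middle_informative (P m) then true else false.
have PbP m : Pb m -> P m by rewrite /Pb; case: excluded_middle_informative.
have PPb m : P m -> Pb m by rewrite /Pb; case: excluded_middle_informative.
have exPb : exists m, Pb m by exists (N R); apply: PPb; exists R.
have [m /PbP [R0 [h0 e0]] mmin] := ex_minnP exPb.
have ex : exists c, is_min_cost w l v c.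
  exists (cost w l v R0); split; first by exists R0.
  move=> R' h'; rewrite !costE -/(N R0) -/(N R').
  have : (N R0 <= N R')%N by rewrite e0; apply: mmin; apply: PPb; exists R'.
  rewrite -(ler_nat rat) => le; lra.
rewrite /rc; case: excluded_middle_informative => [h|//].
by case: (proj2_sig (constructive_indefinite_description _ h)) => _; apply.
Qed.

Section Tour.
Variables (V : finType) (f g : V -> V).
Hypotheses (fg : cancel f g) (gf : cancel g f) (orb : forall x y, fconnect f x y).
Hypothesis n3 : 2 < #|V|.

Lemma leave (P : pred V) x y : P x -> ~~ P y ->
  exists a, [/\ P a, ~~ P (f a) &
    connect (fun s t => [&& (f s == t), P s & P t]) x a].
Proof.
move=> Px nPy.
have [a [b [eab Pa nPb c]]] := cross (orb x y) Px nPy.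
by exists a; move/eqP: eab => eab; rewrite -eab in nPb.
Qed.

Lemma closed_small (Sx : {set V}) x : x \in Sx ->
  (forall y, y \in Sx -> f y \in Sx) -> #|Sx| < #|V| -> False.
Proof.
move=> xS cl cS.
have : ~~ ([set: V] \subset Sx).
  by apply: contraL cS => /subset_leq_card; rewrite cardsT -leqNgt.
case/subsetPn => z _ nz.
have [a [aS naS _]] := leave (P := mem Sx) xS nz.
by move/negP: naS; apply; apply: cl.
Qed.

Lemma fneq x : f x != x.
Proof.
apply/negP => /eqP e; apply: (@closed_small [set x] x); rewrite ?inE //.
  by move=> y; rewrite !inE => /eqP ->; rewrite e.
by rewrite cards1; apply: ltn_trans n3.
Qed.

Lemma gneq x : g x != x.
Proof. by apply: contraNneq (fneq x) => e; rewrite -{1}e gf. Qed.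

Lemma no2 x : f (f x) != x.
Proof.
apply/negP => /eqP e; apply: (@closed_small [set x; f x] x); rewrite ?inE ?eqxx //.
  by move=> y; rewrite !inE => /orP[] /eqP ->; rewrite ?e eqxx ?orbT.
by apply: leq_ltn_trans n3; rewrite cards2; case: (_ != _).
Qed.

End Tour.

Lemma bigmin_le (I : eqType) (r : seq I) (P : pred I) (F : I -> nat) d y :
  y \in r -> P y -> \big[minn/d]_(i <- r | P i) F i <= F y.
Proof.
elim: r => [|i r IH] //; rewrite inE big_cons => /orP[/eqP <- -> | yr Py].
  exact: geq_minl.
case: (P i); last exact: IH.
by apply: leq_trans (geq_minr _ _) (IH yr Py).
Qed.

Lemma ord_le (V : finType) (w : V -> V -> nat) l v x y :
  y \notin S w l v -> ord w l v x <= w x y.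
Proof. by move=> yS; apply: bigmin_le; rewrite ?mem_index_enum. Qed.

Lemma pred_ge1 n : 0 < n -> n != 1 -> 1 <= n.-1.
Proof. by case: n => [|[|n]]. Qed.

Lemma arith3 a b : 0 < a -> 0 < b -> a.-1 + b.-1 + 2 * 1 = a + b.
Proof. lia. Qed.

Lemma arith2 S1 S3 B S2 : S1 <= S3 -> 1 < B -> 1 + S1 <= S3 + (B.-1 + S2).
Proof. lia. Qed.

Lemma arith (SV Ena Enb Ba Bb Sa Sb H nA sf q : nat) :
  SV <= Ena + Enb -> Ba = Bb -> Sa = Ba + Ena -> Sb = Bb + Enb ->
  H + 2 * nA = Sa + Sb -> sf < q -> q <= H ->
  2 * (Ba + 2 * sf) + SV + 2 <= 7 * H + 2 * nA.
Proof. lia. Qed.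

Section PerV.
Variables (V : finType) (w : V -> V -> nat) (l : nat).
Hypothesis Hmet : is_int_metric w.
Variables (f g : V -> V).
Hypotheses (fg : cancel f g) (gf : cancel g f) (orb : forall x y, fconnect f x y).
Hypothesis n3 : 2 < #|V|.
Hypothesis hl : l < #|V|.

Definition aa x := w x (f x).
Definition bb x := w (g x) x.
Definition hh x := (aa x).-1 + (bb x).-1.

Lemma aa_pos x : 0 < aa x.
Proof. by rewrite lt0n /aa (w0 Hmet) eq_sym (fneq orb n3). Qed.

Lemma bb_pos x : 0 < bb x.
Proof. by rewrite lt0n /bb (w0 Hmet) (gneq gf orb n3). Qed.

Lemma per_v v : light w l v ->
  (rc w l v <= (7%:R / 2%:R) * (\sum_(x in S w l v) hh x)%:R :> rat)%R.
Proof.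
move=> lv; set A := S w l v.
have vA : v \in A := in_S lv.
have [z zA] : exists z, z \notin A.
  have : ~~ ([set: V] \subset A).
    apply/negP => /subset_leq_card; rewrite cardsT => h.
    by have := leq_trans h (card_S lv); rewrite leqNgt hl.
  by case/subsetPn => z _ ?; exists z.
have [q0 [q0A nq0 _]] := leave orb (P := mem A) vA zA.
have {}q0A : q0 \in A := q0A. have {}nq0 : f q0 \notin A := nq0.
set B := [set x in A | f x \in A].
set Ein := [seq (y, f y) | y <- enum B].
set Q := [set x in A | f x \notin A].
have h1 : q0 \in Q by rewrite inE q0A.
have h2 : Q \subset A by apply/subsetP => x; rewrite inE => /andP[].
have h3 : forall x, x \in A -> exists2 q, q \in Q & connect (mg_rel Ein) x q.
  move=> x xA; have [a' [a'A na' c]] := leave orb (P := mem A) xA zA.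
  have {}a'A : a' \in A := a'A.
  exists a'; first by rewrite inE a'A.
  apply: connect_sub c => s t /and3P[/eqP e sA tA]; apply: connect1.
  rewrite /mg_rel -e; apply/orP; left; apply: (map_f (fun y => (y, f y))).
  by rewrite mem_enum inE e; apply/andP; split.
have [F [sF eF cF]] := @aug V (G1 w) A (S_conn Hmet lv) #|Q| Q Ein q0 h1 (leqnn _) h2 h3.
set R := Ein ++ F ++ F.
have hR : is_reconf w l v R.
  split.
  - move=> p; rewrite !mem_cat => /or3P[|pF|pF].
    + case/mapP => y; rewrite mem_enum inE => /andP[yA fyA] ->.
      by rewrite /= yA fyA eq_sym (fneq orb n3).
    + by have /and3P[g1 p1 p2] := eF p pF; rewrite p1 p2 (G1neq Hmet g1).
    + by have /and3P[g1 p1 p2] := eF p pF; rewrite p1 p2 (G1neq Hmet g1).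
  - move=> x y xA yA; apply: mg_rel_sub (cF x y xA yA) => p.
    by rewrite !mem_cat => /orP[]->; rewrite ?orbT.
apply: le_trans (rc_le hR) _.
have [u [/andP[hb _] AE]] := S_spec lv.
have exitA x y : x \in A -> y \notin A -> G1 w x y -> x = v /\ y = u.
  by rewrite /A AE; apply: exit_lem.
have sumR : \sum_(p <- R) w p.1 p.2 = \sum_(x in A | f x \in A) aa x + 2 * size F.
  rewrite /R !big_cat /= big_map big_enum /=.
  have -> : \sum_(p <- F) w p.1 p.2 = size F.
    rewrite -sum1_size big_seq [RHS]big_seq; apply: eq_bigr => p pF.
    by have /and3P[/eqP g1 _ _] := eF p pF.
  by rewrite addnn -mul2n; congr (_ + _); apply: eq_bigl => x; rewrite inE.
have sumV1 : \sum_(x in V1 w l v R) ord w l v x <=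
    \sum_(x in A | f x \notin A) aa x + \sum_(x in A | g x \notin A) bb x.
  rewrite /V1 -/A (eq_bigl (fun x => (x \in A) && odd (deg R x))); last first.
    by move=> x; rewrite inE.
  rewrite !big_mkcondr -big_split /=; apply: leq_sum => x xA.
  have c1 : count (fun p : V * V => p.1 == x) Ein = (x \in B).
    rewrite count_map -mem_enum -count_uniq_mem ?enum_uniq //.
  have c2 : count (fun p : V * V => p.2 == x) Ein = (g x \in B).
    rewrite count_map -mem_enum -count_uniq_mem ?enum_uniq //.
    apply: eq_count => y /=; apply/eqP/eqP => [<-|->]; [by rewrite fg | by rewrite gf].
  have dE : odd (deg R x) = odd ((f x \in A) + (g x \in A)).
    rewrite /deg /R !count_cat c1 c2 !addnn !oddD !odd_double !addbF.
    by rewrite !inE xA gf xA andbT.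
  rewrite dE; case hf: (f x \in A); case hg: (g x \in A) => //=.
  - by rewrite add0n /bb (wsym Hmet); apply: ord_le; rewrite -/A hg.
  - by rewrite addn0; apply: ord_le; rewrite -/A hf.
have swap : \sum_(x in A | f x \in A) aa x = \sum_(x in A | g x \in A) bb x.
  rewrite [RHS](reindex_inj (can_inj fg)) /=.
  by apply: eq_big => [x|x _]; rewrite /bb ?fg // andbC.
have sumA : \sum_(x in A) aa x =
    \sum_(x in A | f x \in A) aa x + \sum_(x in A | f x \notin A) aa x.
  by rewrite (bigID (fun x => f x \in A)).
have sumB : \sum_(x in A) bb x =
    \sum_(x in A | g x \in A) bb x + \sum_(x in A | g x \notin A) bb x.
  by rewrite (bigID (fun x => g x \in A)).
have hA : \sum_(x in A) hh x + 2 * #|A| = \sum_(x in A) aa x + \sum_(x in A) bb x.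
  rewrite -sum1_card big_distrr /= -!big_split /=; apply: eq_bigr => x _.
  by rewrite /hh; apply: arith3; [apply: aa_pos | apply: bb_pos].
have qD2 : #|Q| <= \sum_(x in A) hh x.
  have hsplit : \sum_(x in A | f x \notin A) (aa x).-1
      + \sum_(x in A | g x \notin A) (bb x).-1 <= \sum_(x in A) hh x.
    rewrite /hh big_split /=; apply: leq_add.
      by rewrite [X in _ <= X](bigID (fun x => f x \notin A)) /= leq_addr.
    by rewrite [X in _ <= X](bigID (fun x => g x \notin A)) /= leq_addr.
  have cQ : #|Q| = \sum_(x in A | f x \notin A) 1.
    by rewrite -sum1_card; apply: eq_bigl => x; rewrite inE.
  rewrite cQ; apply: leq_trans hsplit.
  have [/existsP [x0 /andP[x0Q /eqP ax0]] | none] :=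
    boolP [exists x, (x \in Q) && (aa x == 1)].
  - move: x0Q; rewrite inE => /andP[x0A nfx0].
    have g0 : G1 w x0 (f x0) by apply/eqP.
    have [ex0 efx0] := exitA x0 (f x0) x0A nfx0 g0.
    subst x0.
    have uA : u \notin A by rewrite -efx0.
    have vA' : ~~ (v \notin A) by rewrite negbK.
    have [a' [na' fa' _]] := leave orb (P := fun y => y \notin A) uA vA'.
    have {}na' : a' \notin A := na'.
    have {}fa' : f a' \in A by move: fa'; rewrite /= negbK.
    have bx1 : 1 < bb (f a').
      rewrite /bb fg.
      have p0 : 0 < w a' (f a') by rewrite lt0n (w0 Hmet) eq_sym (fneq orb n3).
      rewrite ltn_neqAle p0 andbT eq_sym.
      apply/negP => /eqP e1.
      have g1 : G1 w (f a') a' by rewrite /G1 (wsym Hmet) e1.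
      have [e2 e3] := exitA _ _ fa' na' g1.
      by move/eqP: (no2 orb n3 v); apply; rewrite efx0 -e3 e2.
    rewrite (bigD1 v) /=; last by rewrite vA.
    rewrite [X in _ <= _ + X](bigD1 (f a')) /=; last by rewrite fa' fg.
    set S1 := (X in 1 + X <= _).
    set S2 := (X in _ <= _ + (_ + X)).
    set S3 := (X in _ <= X + _).
    suff le1 : S1 <= S3 by apply: arith2.
    rewrite /S1 /S3 [X in _ <= X](bigD1 v) /=; last by rewrite vA.
    apply: leq_trans (leq_addl _ _).
    apply: leq_sum => x /andP[/andP[xA nfx] xv].
    have : aa x != 1.
      apply/negP => /eqP e; have gx : G1 w x (f x) by apply/eqP.
      by have [xv' _] := exitA x (f x) xA nfx gx; rewrite xv' eqxx in xv.
    by move=> ne1; apply: (pred_ge1 (aa_pos x) ne1).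
  - apply: leq_trans (leq_addr _ _); apply: leq_sum => x /andP[xA nfx].
    move/existsPn: none => /(_ x); rewrite inE xA nfx /= => ne1.
    by apply: (pred_ge1 (aa_pos x) ne1).
have key : (2 * (\sum_(x in A | f x \in A) aa x + 2 * size F)
     + \sum_(x in V1 w l v R) ord w l v x + 2 <= 7 * \sum_(x in A) hh x + 2 * #|A|)%N.
  exact: arith sumV1 swap sumA sumB hA sF qD2.
rewrite costE sumR -/A.
move: key; rewrite -(ler_nat rat) !(natrD, natrM) => key.
lra.
Qed.
End PerV.

Lemma sum_disj (V : finType) (L0 : {set V}) (Sf : V -> {set V}) (h : V -> nat) :
  (forall v1 v2 y, v1 \in L0 -> v2 \in L0 -> y \in Sf v1 -> y \in Sf v2 -> v1 = v2) ->
  \sum_(v in L0) \sum_(x in Sf v) h x <= \sum_x h x.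
Proof.
move=> disj.
rewrite (eq_bigr (fun v => \sum_x (if x \in Sf v then h x else 0))); last first.
  by move=> v _; rewrite big_mkcond.
rewrite exchange_big /=; apply: leq_sum => x _.
have [/existsP[v0 /andP[v0L xv0]] | none] := boolP [exists v, (v \in L0) && (x \in Sf v)].
  rewrite (bigD1 v0) //= xv0 big1 ?addn0 // => v /andP[vL ne].
  case: ifP => // xv; by rewrite (disj _ _ _ vL v0L xv xv0) eqxx in ne.
rewrite big1 // => v vL; case: ifP => // xv.
by move/existsPn: none => /(_ v); rewrite vL xv.
Qed.

Theorem mainTheorem7 (V : finType) (w : V -> V -> nat) (l : nat) :
  is_int_metric w ->
  G1_connected w ->
  (0 < l)%N -> (l * 2 < #|V|)%N ->
  ((#|V|)%:R + (1 / 7%:R) * \sum_(v in L w l) rc w l v <= (TSP w)%:R :> rat)%R.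
Proof.
move=> Hmet _ l0 hl2.
have hl : l < #|V| by lia.
have n3 : 2 < #|V| by lia.
have [s [ps Ts]] : exists s, perm_eq s (enum V) /\ TSP w = cycle_weight w s.
  rewrite /TSP big_seq.
  apply: (big_ind (fun m => exists s, perm_eq s (enum V) /\ m = cycle_weight w s)).
  - by exists (enum V).
  - move=> x y [s1 [p1 e1]] [s2 [p2 e2]]; rewrite /minn; case: ifP => _;
      [exists s1 | exists s2]; by [].
  - by move=> s0; rewrite mem_permutations => p0; exists s0.
have us : uniq s by rewrite (perm_uniq ps) enum_uniq.
have ins x : x \in s by rewrite (perm_mem ps) mem_enum.
pose f := next s; pose g := prev s.
have fg : cancel f g := prev_next us.
have gf : cancel g f := next_prev us.
have orb x y : fconnect f x y.
  by rewrite (fconnect_cycle (cycle_next us) (ins x)) ins.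
have TE : TSP w = \sum_x aa w f x.
  rewrite Ts cycle_weight_next // (perm_big _ ps) /=.
  by rewrite big_enum.
have hsum := sum_disj (hh w f g) (S_disj Hmet (l := l)).
have e1 : \sum_x hh w f g x + 2 * #|V| = \sum_x aa w f x + \sum_x bb w g x.
  rewrite -sum1_card big_distrr -!big_split /=; apply: eq_bigr => x _.
  by apply: arith3; [apply: (aa_pos Hmet orb n3) | apply: (bb_pos Hmet gf orb n3)].
have e2 : \sum_x bb w g x = \sum_x aa w f x.
  by rewrite (reindex_inj (can_inj fg)); apply: eq_bigr => x _; rewrite /bb /aa fg.
have hrc : (\sum_(v in L w l) rc w l v <=
    \sum_(v in L w l) (7%:R / 2%:R) * (\sum_(x in S w l v) hh w f g x)%:R :> rat)%R.
  apply: ler_sum => v; rewrite inE => /andP[lv _].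
  exact: (per_v Hmet fg gf orb n3 hl lv).
rewrite -mulr_sumr -natr_sum in hrc.
move: hsum; rewrite -(ler_nat rat) => hsum.
have e3 : ((\sum_x hh w f g x)%:R + 2 * (#|V|)%:R = 2 * (\sum_x aa w f x)%:R :> rat)%R.
  by rewrite -natrM -natrD e1 e2 addnn -mul2n natrM.
rewrite TE; lra.
Qed.
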